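(* Let $\theta_0\in\,]0,\pi/2[$ and $\kappa>0$, and define $F(\theta)=G'(\theta)\tan\theta-G(\theta)$ for $\theta\in[\theta_0,\pi/2[$. Then for every $z\in\,]-\infty,\,e^{-\kappa}-1]$ the equation $F(\theta)=z$ has a unique solution $\theta=\varphi(z)\in[\theta_0,\pi/2[$.
   Context: For $\theta\in[\theta_0,\pi/2]$, $G(\theta)=\Big(1-\exp\Big\{\frac{-\kappa}{\cos(\theta-\theta_0)}\Big\}\Big)\cos(\theta-\theta_0)$. *)

(* Defs.v *)
From Stdlib Require Import Reals Lra.
Open Scope R_scope.

Definition G (kappa theta0 : R) (theta : R) : R :=
  (1 - exp (- kappa / cos (theta - theta0))) * cos (theta - theta0).

(* F(θ) = z, where F(θ) = G'(θ) tan θ - G(θ); G' is the derivative of G,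
   expressed through Stdlib's derivable_pt_lim (so "F(θ) = z" means: G is
   differentiable at θ with derivative d, and d * tan θ - G θ = z). *)
Definition F_eq (kappa theta0 theta z : R) : Prop :=
  exists d : R, derivable_pt_lim (G kappa theta0) theta d /\
                d * tan theta - G kappa theta0 theta = z.

(* Main.v *)
Require Import Defs.
From Stdlib Require Import Reals Lra.
From Coquelicot Require Import Coquelicot.
Open Scope R_scope.

Definition G1 k t0 t := - sin (t - t0) * (1 - exp (- k / cos (t - t0)) * (1 + k / cos (t - t0))).
Definition G2 k t0 t := - cos (t - t0) * (1 - exp (- k / cos (t - t0)) * (1 + k / cos (t - t0)))
   - (sin (t - t0))^2 * exp (- k / cos (t - t0)) * (k / cos (t - t0)) * k / (cos (t - t0))^2.

Ltac fin := match goal with Hc : cos (?t - ?t0) <> 0 |- _ => unfold Rminus, Rdiv in *;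
  set (c := cos (t + - t0)) in *; set (s := sin (t + - t0)) in *;
  field; exact Hc end.

Lemma dG k t0 t : cos (t - t0) <> 0 -> is_derive (G k t0) t (G1 k t0 t).
Proof. intros Hc. unfold G, G1. auto_derive. auto. fin. Qed.
Lemma dG1 k t0 t : cos (t - t0) <> 0 -> is_derive (G1 k t0) t (G2 k t0 t).
Proof. intros Hc. unfold G2, G1. auto_derive. auto. fin. Qed.

Definition Fn k t0 t := G1 k t0 t * tan t - G k t0 t.
Definition Fd k t0 t := G2 k t0 t * tan t + G1 k t0 t * (tan t)^2.

Section S.
Variables (k t0 : R).
Hypothesis Ht0 : 0 < t0 < PI / 2.
Hypothesis Hk : 0 < k.

Lemma cpos t : t0 <= t < PI/2 -> 0 < cos (t - t0).
Proof. intros H. apply cos_gt_0; lra. Qed.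

Lemma spos t : t0 <= t < PI/2 -> 0 <= sin (t - t0).
Proof. intros H. apply sin_ge_0; lra. Qed.

Lemma ctan t : t0 <= t < PI/2 -> cos t <> 0.
Proof. intros H. apply Rgt_not_eq, cos_gt_0; lra. Qed.

Lemma tpos t : t0 <= t < PI/2 -> 0 < tan t.
Proof. intros H. apply tan_gt_0; lra. Qed.

Lemma hpos c : 0 < c -> 0 < 1 - exp (- k / c) * (1 + k / c).
Proof.
  intros Hc. set (x := k / c).
  assert (Hx : 0 < x) by (unfold x; apply Rdiv_lt_0_compat; lra).
  replace (- k / c) with (- x) by (unfold x, Rdiv; ring).
  rewrite exp_Ropp.
  assert (H1 := exp_ineq1 x (Rgt_not_eq _ _ Hx)).
  assert (He := exp_pos x).
  assert (/ exp x * (1 + x) < / exp x * exp x)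
    by (apply Rmult_lt_compat_l; [apply Rinv_0_lt_compat; lra | lra]).
  rewrite Rinv_l in H by lra. lra.
Qed.

Lemma Elt1 c : 0 < c -> exp (- k / c) < 1.
Proof.
  intros Hc. rewrite <- exp_0. apply exp_increasing.
  assert (0 < k / c) by (apply Rdiv_lt_0_compat; lra).
  unfold Rdiv in *. lra.
Qed.

Lemma G1le t : t0 <= t < PI/2 -> G1 k t0 t <= 0.
Proof.
  intros H. unfold G1. assert (A := spos t H). assert (B := hpos _ (cpos t H)).
  assert (0 <= sin (t - t0) * (1 - exp (- k / cos (t - t0)) * (1 + k / cos (t - t0))))
    by (apply Rmult_le_pos; lra). lra.
Qed.

Lemma Gge t : t0 <= t < PI/2 -> 0 <= G k t0 t.
Proof.
  intros H. unfold G. assert (A := cpos t H). assert (B := Elt1 _ A).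
  apply Rmult_le_pos; lra.
Qed.

Lemma G2lt t : t0 <= t < PI/2 -> G2 k t0 t < 0.
Proof.
  intros H. unfold G2. assert (A := cpos t H). assert (B := hpos _ A).
  set (c := cos (t - t0)) in *. set (s := sin (t - t0)).
  set (E := exp (- k / c)) in *.
  assert (0 < c * (1 - E * (1 + k / c))) by (apply Rmult_lt_0_compat; lra).
  assert (0 <= s ^ 2 * E * (k / c) * k / c ^ 2).
  { unfold Rdiv. apply Rmult_le_pos; [|left; apply Rinv_0_lt_compat; apply pow_lt; lra].
    apply Rmult_le_pos; [|lra]. apply Rmult_le_pos.
    - apply Rmult_le_pos; [apply pow2_ge_0 | left; apply exp_pos].
    - left; apply Rmult_lt_0_compat; [lra | apply Rinv_0_lt_compat; lra]. }
  lra.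
Qed.

Lemma Fdlt t : t0 <= t < PI/2 -> Fd k t0 t < 0.
Proof.
  intros H. unfold Fd. assert (A := G2lt t H). assert (B := G1le t H).
  assert (C := tpos t H).
  assert (0 < - G2 k t0 t * tan t) by (apply Rmult_lt_0_compat; lra).
  assert (0 <= - G1 k t0 t * tan t ^ 2) by (apply Rmult_le_pos; [lra|apply pow2_ge_0]). lra.
Qed.

Lemma dGR t : t0 <= t < PI/2 -> derivable_pt_lim (G k t0) t (G1 k t0 t).
Proof. intros H. apply is_derive_Reals, dG, Rgt_not_eq, cpos, H. Qed.

Lemma dF t : t0 <= t < PI/2 -> derivable_pt_lim (Fn k t0) t (Fd k t0 t).
Proof.
  intros H.
  assert (H1 : derivable_pt_lim (G1 k t0) t (G2 k t0 t))
    by (apply is_derive_Reals, dG1, Rgt_not_eq, cpos, H).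
  assert (H2 : derivable_pt_lim tan t (tan t ^ 2 + 1))
    by (apply is_derive_Reals, is_derive_tan, ctan, H).
  assert (H3 := derivable_pt_lim_minus _ _ _ _ _
     (derivable_pt_lim_mult _ _ _ _ _ H1 H2) (dGR t H)).
  unfold Fd. replace (G2 k t0 t * tan t + G1 k t0 t * tan t ^ 2) with
    (G2 k t0 t * tan t + G1 k t0 t * (tan t ^ 2 + 1) - G1 k t0 t) by ring.
  exact H3.
Qed.

Lemma Fdecr a b : t0 <= a -> a < b -> b < PI/2 -> Fn k t0 b < Fn k t0 a.
Proof.
  intros Ha Hab Hb.
  destruct (MVT_cor2 (Fn k t0) (Fd k t0) a b Hab) as [c [Hc1 Hc2]].
  { intros c Hc. apply dF. lra. }
  assert (Fd k t0 c < 0) by (apply Fdlt; lra).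
  assert (Fd k t0 c * (b - a) < 0) by nra. lra.
Qed.

Lemma G1decr a b : t0 <= a -> a < b -> b < PI/2 -> G1 k t0 b < G1 k t0 a.
Proof.
  intros Ha Hab Hb.
  destruct (MVT_cor2 (G1 k t0) (G2 k t0) a b Hab) as [c [Hc1 Hc2]].
  { intros c Hc. apply is_derive_Reals, dG1, Rgt_not_eq, cpos. lra. }
  assert (G2 k t0 c < 0) by (apply G2lt; lra).
  assert (G2 k t0 c * (b - a) < 0) by nra. lra.
Qed.

Lemma Feq_iff t z : t0 <= t < PI/2 -> (F_eq k t0 t z <-> Fn k t0 t = z).
Proof.
  intros H. split.
  - intros [d [Hd Hz]]. rewrite (uniqueness_limite _ _ _ _ Hd (dGR t H)) in Hz.
    exact Hz.
  - intros Hz. exists (G1 k t0 t). split; [apply dGR, H | exact Hz].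
Qed.

Lemma Ft0 : Fn k t0 t0 = exp (- k) - 1.
Proof.
  unfold Fn, G1, G. replace (t0 - t0) with 0 by ring.
  rewrite sin_0, cos_0. replace (- k / 1) with (- k) by field. ring.
Qed.

End S.

Theorem lemma3p2 (theta0 kappa : R)
  (Htheta0 : 0 < theta0 < PI / 2) (Hkappa : 0 < kappa) :
  forall z : R, z <= exp (- kappa) - 1 ->
    exists! theta : R, (theta0 <= theta < PI / 2) /\ F_eq kappa theta0 theta z.
Proof.
  intros z Hz.
  set (k := kappa) in *. set (t0 := theta0) in *.
  assert (Ex : exists th, (t0 <= th < PI / 2) /\ Fn k t0 th = z).
  { destruct (Req_dec z (exp (- k) - 1)) as [E|E].
    - exists t0. split; [lra|]. rewrite Ft0, E. reflexivity.
    - assert (Hz' : z < Fn k t0 t0) by (rewrite Ft0; lra).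
      set (m := (t0 + PI / 2) / 2).
      assert (Hm : t0 < m < PI / 2) by (unfold m; lra).
      assert (Hg : G1 k t0 m < 0).
      { unfold G1. assert (0 < sin (m - t0)) by (apply sin_gt_0; lra).
        assert (0 < 1 - exp (- k / cos (m - t0)) * (1 + k / cos (m - t0)))
          by (apply hpos; [lra | apply cpos; lra]).
        nra. }
      set (g := G1 k t0 m) in *.
      assert (Htm : 0 < tan m) by (apply tan_gt_0; lra).
      set (M := Rmax (tan m) (z / g) + 1).
      assert (HM1 : tan m < M) by (unfold M; generalize (Rmax_l (tan m) (z / g)); lra).
      assert (HM2 : z / g < M) by (unfold M; generalize (Rmax_r (tan m) (z / g)); lra).
      set (ta := atan M).
      assert (Hta1 : ta < PI / 2) by (unfold ta; generalize (atan_bound M); lra).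
      assert (Hta2 : m < ta).
      { unfold ta. rewrite <- (atan_tan m) at 1 by lra. apply atan_increasing; lra. }
      assert (Htan : tan ta = M) by (unfold ta; apply tan_atan).
      assert (HFa : Fn k t0 ta < z).
      { unfold Fn. rewrite Htan.
        assert (G1 k t0 ta < g) by (apply G1decr; lra).
        assert (0 <= G k t0 ta) by (apply Gge; lra).
        assert (g * M < g * (z / g)) by (apply Rmult_lt_gt_compat_neg_l; lra).
        replace (g * (z / g)) with z in H1 by (field; lra).
        assert (G1 k t0 ta * M < g * M) by (apply Rmult_lt_compat_r; lra).
        lra. }
      destruct (Ranalysis5.IVT_interv (fun t => z - Fn k t0 t) t0 ta) as [x [Hx1 Hx2]].
      + intros a Ha. apply continuity_pt_minus.
        * apply continuity_pt_const. intros u v; reflexivity.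
        * apply derivable_continuous_pt. exists (Fd k t0 a). apply dF; lra.
      + lra.
      + lra.
      + lra.
      + exists x. split; [lra|]. lra. }
  destruct Ex as [th [Hth1 Hth2]].
  exists th. split.
  - split; [exact Hth1|]. eapply Feq_iff; eassumption.
  - intros th' [Hr Hf]. eapply Feq_iff in Hf; [|eassumption|exact Hr].
    destruct (Rtotal_order th th') as [L|[L|L]].
    + assert (Fn k t0 th' < Fn k t0 th) by (apply Fdecr; lra). lra.
    + exact L.
    + assert (Fn k t0 th < Fn k t0 th') by (apply Fdecr; lra). lra.
Qed.
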